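(* Let $\{G(n)\}$ be a sequence of random intersection graphs satisfying condition (A) and $\mathrm{Var}(Y(n))=O(1)$. Then $\omega(G(n))=\omega'(G(n))+O_P(1)$. If, in addition, there is a positive sequence $\varepsilon_n\to0$ with $n\,\mathbb P(Y(n)>\varepsilon_n n^{1/2})\to0$, then there is an absolute constant $C$ such that $\mathbb P\big(\omega(G(n))\le \max\{C,\ \omega'(G(n))+3\}\big)\to1$.
   Context: Random intersection graph: given positive integers $n,m$ and a probability measure $P$ on $\{0,1,\dots,m\}$, $G(n,m,P)$ has vertex set $V=[n]$ and attribute set $W=\{w_1,\dots,w_m\}$; independent random subsets $S_1,\dots,S_n\subseteq W$ are drawn with $\mathbb P(S_v=S)=P(|S|)/\binom{m}{|S|}$ for every $S\subseteq W$, and distinct $u,v$ are adjacent iff $S_u\cap S_v\neq\emptyset$. For a sequence $G(n)=G(n,m(n),P(n))$ with $m(n)\to\infty$, $X(n)$ has law $P(n)$ and $Y(n)=(n/m)^{1/2}X(n)$. Condition (A): $\mathbb E\,Y(n)=O(1)$. $\omega(G)$ is the clique number. For $w\in W$, $T(w)=\{v\in V: w\in S_v\}$ (a clique, called monochromatic), and $\omega'(G(n))=\max_{w\in W}|T(w)|$. *)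

(* Defs.v *)
From HB Require Import structures.
From Stdlib Require Import Reals.
From mathcomp Require Import all_boot.
Open Scope R_scope.

Set Implicit Arguments.
Unset Strict Implicit.
Unset Printing Implicit Defensive.

Lemma Rplus_assoc' : associative Rplus.
Proof. by move=> x y z; rewrite Rplus_assoc. Qed.
Lemma Rmult_assoc' : associative Rmult.
Proof. by move=> x y z; rewrite Rmult_assoc. Qed.
HB.instance Definition _ := Monoid.isComLaw.Build R R0 Rplus
  Rplus_assoc' Rplus_comm Rplus_0_l.
HB.instance Definition _ := Monoid.isComLaw.Build R R1 Rmult
  Rmult_assoc' Rmult_comm Rmult_1_l.

(* A configuration of G(n,m,P): vertex v in 'I_n gets attribute set S_v,
   a subset of W = 'I_m. *)
Definition config (n m : nat) := {ffun 'I_n -> {set 'I_m}}.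

(* P : nat -> R represents the law of |S_v| on {0,...,m} (values at k > m
   are irrelevant). It is a probability measure on {0..m}: *)
Definition is_prob_measure (m : nat) (P : nat -> R) : Prop :=
  (forall k, (k <= m)%N -> (0 <= P k)) /\
  \big[Rplus/R0]_(k < m.+1) P k = R1.

(* P(S_v = S) = P(|S|) / binom(m,|S|), independently over v. *)
Definition cfg_weight (n m : nat) (P : nat -> R) (S : config n m) : R :=
  \big[Rmult/R1]_(v : 'I_n) (P #|S v| / INR 'C(m, #|S v|)).

Definition prob (n m : nat) (P : nat -> R) (E : pred (config n m)) : R :=
  \big[Rplus/R0]_(S : config n m | E S) cfg_weight P S.

Definition adj (n m : nat) (S : config n m) (u v : 'I_n) : bool :=
  (u != v) && (S u :&: S v != set0).

Definition is_clique (n m : nat) (S : config n m) (K : {set 'I_n}) : bool :=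
  [forall u in K, forall v in K, (u != v) ==> adj S u v].

Definition clique_number (n m : nat) (S : config n m) : nat :=
  \max_(K : {set 'I_n} | is_clique S K) #|K|.

Definition T (n m : nat) (S : config n m) (w : 'I_m) : {set 'I_n} :=
  [set v | w \in S v].

Definition omega' (n m : nat) (S : config n m) : nat :=
  \max_(w : 'I_m) #|T S w|.

(* Y(n) = (n/m)^{1/2} X(n), where X(n) has law P(n). *)
Definition Yscale (n m : nat) : R := sqrt (INR n / INR m).

Definition EY (n m : nat) (P : nat -> R) : R :=
  (Yscale n m * \big[Rplus/R0]_(k < m.+1) (INR k * P k)).

Definition EY2 (n m : nat) (P : nat -> R) : R :=
  (Yscale n m ^ 2 * \big[Rplus/R0]_(k < m.+1) (INR k ^ 2 * P k)).

Definition VarY (n m : nat) (P : nat -> R) : R :=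
  (EY2 n m P - EY n m P ^ 2).

Definition Rltb (x y : R) : bool := if Rlt_dec x y then true else false.

Definition probY_gt (n m : nat) (P : nat -> R) (t : R) : R :=
  \big[Rplus/R0]_(k < m.+1 | Rltb t (Yscale n m * INR k)) P k.

Definition eventually_bounded (u : nat -> R) : Prop :=
  exists B N, forall n, (N <= n)%N -> (Rabs (u n) <= B).

Definition tends_to_infinity (u : nat -> nat) : Prop :=
  forall M, exists N, forall n, (N <= n)%N -> (M <= u n)%N.

Definition tends_to (u : nat -> R) (l : R) : Prop :=
  forall eps, (0 < eps) -> exists N, forall n, (N <= n)%N ->
    (Rabs (u n - l) < eps).

(* Standing assumptions on the sequence G(n) = G(n, m(n), P(n)). *)
Definition ri_sequence (m : nat -> nat) (P : nat -> nat -> R) : Prop :=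
  tends_to_infinity m /\ forall n, is_prob_measure (m n) (P n).

Definition condA (m : nat -> nat) (P : nat -> nat -> R) : Prop :=
  eventually_bounded (fun n => EY n (m n) (P n)).

(* Main.v *)
Require Import Defs.
From HB Require Import structures.
From Stdlib Require Import Reals Lra Lia Psatz ZArith.
From mathcomp Require Import all_boot zify.
Set Implicit Arguments.
Unset Strict Implicit.
Unset Printing Implicit Defensive.

Section Det.
Variables (n m : nat).
Implicit Types (S : config n m).

Lemma ex_in (T : finType) (A : {set T}) : (0 < #|A|)%N -> exists x, x \in A.
Proof. by move/card_gt0P. Qed.

Lemma ex2 (T : finType) (A : {set T}) : (2 <= #|A|)%N ->
  exists a b, [/\ a \in A, b \in A & a != b].
Proof.
move=> h; have [a Ha] := ex_in (leq_trans (isT : (0 < 2)%N) h).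
have h1 : (0 < #|A :\ a|)%N by move: h; rewrite (cardsD1 a A) Ha; lia.
have [b] := ex_in h1; rewrite !inE => /andP[ba Hb].
by exists a, b; split => //; rewrite eq_sym.
Qed.

Lemma ex3 (T : finType) (A : {set T}) : (3 <= #|A|)%N ->
  exists a b c, [/\ [/\ a \in A, b \in A & c \in A] & [/\ a != b, a != c & b != c]].
Proof.
move=> h; have [a Ha] := ex_in (leq_trans (isT : (0 < 3)%N) h).
have h1 : (2 <= #|A :\ a|)%N by move: h; rewrite (cardsD1 a A) Ha; lia.
have [b [c [Hb Hc bc]]] := ex2 h1; move: Hb Hc; rewrite !inE => /andP[ba Hb] /andP[ca Hc].
by exists a, b, c; split; split => //; rewrite eq_sym.
Qed.

Lemma ex4 (T : finType) (A : {set T}) : (4 <= #|A|)%N ->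
  exists a b c d, [/\ [/\ a \in A, b \in A, c \in A & d \in A] &
     [/\ a != b, a != c, a != d & [/\ b != c, b != d & c != d]]].
Proof.
move=> h; have [a Ha] := ex_in (leq_trans (isT : (0 < 4)%N) h).
have h1 : (3 <= #|A :\ a|)%N by move: h; rewrite (cardsD1 a A) Ha; lia.
have [b [c [d [[Hb Hc Hd] [bc bd cd]]]]] := ex3 h1.
move: Hb Hc Hd; rewrite !inE => /andP[ba Hb] /andP[ca Hc] /andP[da Hd].
by exists a, b, c, d; split; split => //; rewrite eq_sym.
Qed.

Lemma card3 (T : finType) (A : {set T}) a b c :
  a \in A -> b \in A -> c \in A -> a != b -> a != c -> b != c -> (3 <= #|A|)%N.
Proof.
move=> Ha Hb Hc ab ac bc.
have : #|[set a; b; c]| = 3%N by rewrite setUC cardsU1 cards2 ab !inE negb_or ![c == _]eq_sym ac bc.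
move=> <-; apply: subset_leq_card; apply/subsetP => x; rewrite !inE.
by case/orP => [/orP[]|] /eqP ->.
Qed.

Lemma clique_le S K : is_clique S K -> (#|K| <= clique_number S)%N.
Proof. by move=> h; apply: (@leq_bigmax_cond _ _ (fun K : {set 'I_n} => #|K|) K h). Qed.

Lemma clique_number_le S X :
  (forall K, is_clique S K -> (#|K| <= X)%N) -> (clique_number S <= X)%N.
Proof. by move=> h; apply/bigmax_leqP => K; apply: h. Qed.

Lemma cliqueP S K u v : is_clique S K -> u \in K -> v \in K -> u != v ->
  exists w, (w \in S u) && (w \in S v).
Proof.
move=> /forallP /(_ u) /implyP /(_ _) h uK vK uv.
have := h uK => /forallP /(_ v) /implyP /(_ vK) /implyP /(_ uv).
rewrite /adj uv /= => /set0Pn [w]; rewrite inE => hw; by exists w.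
Qed.

Lemma clique_sub S (K K' : {set 'I_n}) : is_clique S K -> K' \subset K -> is_clique S K'.
Proof.
move=> hK hs; apply/forallP => u; apply/implyP => uK; apply/forallP => v.
apply/implyP => vK; move: hK => /forallP /(_ u) /implyP /(_ (subsetP hs _ uK)).
by move=> /forallP /(_ v) /implyP /(_ (subsetP hs _ vK)).
Qed.

Lemma T_clique S w : is_clique S (T S w).
Proof.
apply/forallP => u; apply/implyP; rewrite inE => hu; apply/forallP => v.
apply/implyP; rewrite inE => hv; apply/implyP => uv; rewrite /adj uv /=.
by apply/set0Pn; exists w; rewrite inE hu hv.
Qed.

Lemma T_le S w : (#|T S w| <= omega' S)%N.
Proof. exact: (@leq_bigmax _ (fun w => #|T S w|) w). Qed.

Lemma omega'_le S : (omega' S <= clique_number S)%N.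
Proof. by apply/bigmax_leqP => w _; apply: clique_le; apply: T_clique. Qed.

Definition pairdef S (v : 'I_n) : bool :=
  [exists u, (u != v) && [exists w1, [exists w2,
     [&& w1 != w2, w1 \in S u, w2 \in S u, w1 \in S v & w2 \in S v]]]].

Definition tridef S (v : 'I_n) : bool :=
  [exists u, [exists z, [&& u != v, z != v, u != z & [exists w1, [exists w2, [exists w3,
     [&& w1 != w2, w2 != w3, w1 != w3, w1 \in S v, w1 \in S u, w2 \in S u,
         w2 \in S z, w3 \in S z & w3 \in S v]]]]]]].

Definition Bad S : {set 'I_n} := [set v | pairdef S v || tridef S v].

Lemma mono S K : is_clique S K -> [disjoint K & Bad S] -> (2 <= #|K|)%N ->
  exists w, K \subset T S w.
Proof.
move=> hK hd h2.
have nb : forall x, x \in K -> ~~ pairdef S x && ~~ tridef S x.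
  move=> x xK; have := disjointFr hd xK; rewrite inE; by case: (pairdef S x); case: (tridef S x).
have [u [v [uK vK uv]]] := ex2 h2.
have [w /andP[wu wv]] := cliqueP hK uK vK uv.
exists w; apply/subsetP => z zK; rewrite inE.
case: (eqVneq z u) => [->|zu] //; case: (eqVneq z v) => [->|zv] //.
case wz: (w \in S z) => //.
have [w2 /andP[w2u w2z]] := cliqueP hK uK zK (ltac:(by rewrite eq_sym)).
have [w3 /andP[w3z w3v]] := cliqueP hK zK vK zv.
have /andP[npv ntv] := nb v vK.
case: (eqVneq w2 w3) => [e23|n23].
  move: npv => /negP; case; apply/existsP; exists u; rewrite uv /=.
  apply/existsP; exists w; apply/existsP; exists w2; rewrite wu wv w2u /=.
  rewrite e23 w3v andbT; apply/eqP => e; move: wz; by rewrite e -e23 w2z.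
move: ntv => /negP; case; apply/existsP; exists u; apply/existsP; exists z.
rewrite uv zv (eq_sym u z) zu /=.
apply/existsP; exists w; apply/existsP; exists w2; apply/existsP; exists w3.
rewrite n23 wv wu w2u w2z w3z w3v !andbT /=.
apply/andP; split; apply/eqP => e; move: wz; by rewrite e ?w2z ?w3z.
Qed.

Lemma part1_det S : (clique_number S <= omega' S + #|Bad S| + 1)%N.
Proof.
apply: clique_number_le => K hK.
set K' := K :\: Bad S.
have hc : (#|K| <= #|K'| + #|Bad S|)%N.
  rewrite -(cardsID (Bad S) K) addnC leq_add2l; apply: subset_leq_card; exact: subsetIr.
have hK' : is_clique S K' by apply: clique_sub hK _; exact: subsetDl.
case: (leqP 2 #|K'|) => h2; last by lia.
have [w hw] := mono hK' (ltac:(by rewrite disjoints_subset; apply: subsetDr)) h2.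
have := subset_leq_card hw; have := T_le S w; lia.
Qed.


Definition bad1c (w : 'I_m) (z a1 a2 a3 : 'I_n) (u1 u2 u3 : 'I_m) : bool :=
  [&& a1 != a2, a1 != a3, a2 != a3, z != a1, z != a2, z != a3,
      u1 != w, u2 != w & u3 != w].

Definition bad1m S (w : 'I_m) (z a1 a2 a3 : 'I_n) (u1 u2 u3 : 'I_m) : bool :=
  [&& w \in S a1, w \in S a2, w \in S a3,
      u1 \in S a1, u2 \in S a2, u3 \in S a3, u1 \in S z, u2 \in S z
    & u3 \in S z].

Definition bad1 S : bool :=
  [exists w, [exists z, [exists a1, [exists a2, [exists a3,
  [exists u1, [exists u2, [exists u3,
    bad1c w z a1 a2 a3 u1 u2 u3 && bad1m S w z a1 a2 a3 u1 u2 u3]]]]]]]].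

Definition bad2c (v1 v2 v3 v4 : 'I_n) (w12 w13 w14 w23 w24 w34 : 'I_m) : bool :=
  [&& v1 != v2, v1 != v3, v1 != v4, v2 != v3, v2 != v4 & v3 != v4] &&
  [&& w12 != w13, w12 != w14, w13 != w14, w12 != w23, w12 != w24, w23 != w24,
      w13 != w23, w13 != w34, w23 != w34, w14 != w24, w14 != w34 & w24 != w34].

Definition bad2m S (v1 v2 v3 v4 : 'I_n) (w12 w13 w14 w23 w24 w34 : 'I_m) : bool :=
  [&& w12 \in S v1, w13 \in S v1, w14 \in S v1, w12 \in S v2, w23 \in S v2,
      w24 \in S v2, w13 \in S v3, w23 \in S v3, w34 \in S v3, w14 \in S v4,
      w24 \in S v4 & w34 \in S v4].

Definition bad2 S : bool :=
  [exists v1, [exists v2, [exists v3, [exists v4,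
  [exists w12, [exists w13, [exists w14, [exists w23, [exists w24, [exists w34,
    bad2c v1 v2 v3 v4 w12 w13 w14 w23 w24 w34 &&
    bad2m S v1 v2 v3 v4 w12 w13 w14 w23 w24 w34]]]]]]]]]].

Lemma part2_det S : ~~ bad1 S -> ~~ bad2 S -> (clique_number S <= maxn 3 (omega' S))%N.
Proof.
move=> nb1 nb2; apply: clique_number_le => K hK.
case: (leqP #|K| 3) => h3; first by rewrite leq_max h3.
case: (boolP [exists w, (3 <= #|K :&: T S w|)%N]) => [/existsP[w hw]|].
  case: (boolP (K \subset T S w)) => [hs|].
    by rewrite leq_max; apply/orP; right; apply: leq_trans (T_le S w); exact: subset_leq_card.
  case/subsetPn => z zK; rewrite inE => wz.
  have [a1 [a2 [a3 [[h1 h2 h3'] [d12 d13 d23]]]]] := ex3 hw.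
  move: h1 h2 h3'; rewrite !inE => /andP[a1K wa1] /andP[a2K wa2] /andP[a3K wa3].
  have za : forall a, w \in S a -> z != a by move=> a wa; apply/eqP => e; move: wz; rewrite e wa.
  have [u1 /andP[u1z u1a]] := cliqueP hK zK a1K (za _ wa1).
  have [u2 /andP[u2z u2a]] := cliqueP hK zK a2K (za _ wa2).
  have [u3 /andP[u3z u3a]] := cliqueP hK zK a3K (za _ wa3).
  have uw : forall u, u \in S z -> u != w by move=> u uz; apply/eqP => e; move: wz; rewrite -e uz.
  move: nb1 => /negP; case; apply/existsP; exists w; apply/existsP; exists z.
  apply/existsP; exists a1; apply/existsP; exists a2; apply/existsP; exists a3.
  apply/existsP; exists u1; apply/existsP; exists u2; apply/existsP; exists u3.
  by rewrite /bad1c /bad1m d12 d13 d23 !za // !uw // wa1 wa2 wa3 u1a u2a u3a u1z u2z u3z.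
rewrite negb_exists => /forallP hw.
have H : forall w a b c, a != b -> a != c -> b != c -> a \in K -> b \in K -> c \in K ->
    w \in S a -> w \in S b -> w \in S c -> False.
  move=> w a b c ab ac bc aK bK cK wa wb wc.
  have := hw w; rewrite -leqNgt => h2.
  have := card3 (A := K :&: T S w) (a := a) (b := b) (c := c).
  rewrite !inE aK bK cK wa wb wc => /(_ isT isT isT ab ac bc); lia.
have [v1 [v2 [v3 [v4 [[k1 k2 k3 k4] [d12 d13 d14 [d23 d24 d34]]]]]]] := ex4 h3.
have [w12 /andP[a12 b12]] := cliqueP hK k1 k2 d12.
have [w13 /andP[a13 b13]] := cliqueP hK k1 k3 d13.
have [w14 /andP[a14 b14]] := cliqueP hK k1 k4 d14.
have [w23 /andP[a23 b23]] := cliqueP hK k2 k3 d23.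
have [w24 /andP[a24 b24]] := cliqueP hK k2 k4 d24.
have [w34 /andP[a34 b34]] := cliqueP hK k3 k4 d34.
move: nb2 => /negP; case.
apply/existsP; exists v1; apply/existsP; exists v2; apply/existsP; exists v3; apply/existsP; exists v4.
apply/existsP; exists w12; apply/existsP; exists w13; apply/existsP; exists w14.
apply/existsP; exists w23; apply/existsP; exists w24; apply/existsP; exists w34.
rewrite /bad2c /bad2m d12 d13 d14 d23 d24 d34 a12 b12 a13 b13 a14 b14 a23 b23 a24 b24 a34 b34 /=.
have ne : forall x y : 'I_m, (x = y -> False) -> x != y by move=> x y h; apply/eqP.
rewrite !ne //.
all: move=> e; subst; first [ eapply (H _ v1 v2 v3); by eauto
  | eapply (H _ v1 v2 v4); by eauto | eapply (H _ v1 v3 v4); by eauto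
  | eapply (H _ v2 v3 v4); by eauto ].
Qed.

End Det.

Open Scope R_scope.

HB.instance Definition _ := Monoid.isMulLaw.Build R R0 Rmult Rmult_0_l Rmult_0_r.
HB.instance Definition _ := Monoid.isAddLaw.Build R Rmult Rplus Rmult_plus_distr_r Rmult_plus_distr_l.


Lemma sum_le (I : finType) (p : pred I) (F G : I -> R) :
  (forall i, p i -> F i <= G i) ->
  \big[Rplus/R0]_(i | p i) F i <= \big[Rplus/R0]_(i | p i) G i.
Proof.
move=> H; apply: (big_ind2 (fun x y => x <= y)) => //; first lra.
by move=> *; lra.
Qed.

Lemma sum_ge0 (I : finType) (p : pred I) (F : I -> R) :
  (forall i, p i -> 0 <= F i) -> 0 <= \big[Rplus/R0]_(i | p i) F i.
Proof. by move=> H; apply: (big_ind (fun x => 0 <= x)) => //; [lra| move=> *; lra]. Qed.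

Lemma sum_le_pred (I : finType) (p q : pred I) (F : I -> R) :
  (forall i, 0 <= F i) -> (forall i, p i -> q i) ->
  \big[Rplus/R0]_(i | p i) F i <= \big[Rplus/R0]_(i | q i) F i.
Proof.
move=> H0 Hpq; rewrite (big_mkcond p) (big_mkcond q).
apply: sum_le => i _; case: (boolP (p i)) => pi.
  by rewrite (Hpq _ pi); lra.
by case: (q i); [apply: H0| lra].
Qed.

Lemma sum_const_R (I : finType) (c : R) :
  \big[Rplus/R0]_(i : I) c = INR #|I| * c.
Proof.
rewrite big_const; elim: #|I| => [|k IH]; first by rewrite /=; lra.
by rewrite iterS IH S_INR; lra.
Qed.

Lemma sum_le_const (I : finType) (p : pred I) (F : I -> R) c :
  0 <= c -> (forall i, p i -> F i <= c) ->
  \big[Rplus/R0]_(i | p i) F i <= INR #|I| * c.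
Proof.
move=> H0 Hc; apply: Rle_trans (sum_le Hc) _.
rewrite -sum_const_R; exact: (@sum_le_pred _ p predT (fun _ => c) (fun _ => H0) (fun _ _ => isT)).
Qed.

Lemma prod_ge0 (I : finType) (p : pred I) (F : I -> R) :
  (forall i, p i -> 0 <= F i) -> 0 <= \big[Rmult/R1]_(i | p i) F i.
Proof. by move=> H; apply: (big_ind (fun x => 0 <= x)) => //; [lra| move=> *; nra]. Qed.

Lemma prod_le (I : finType) (p : pred I) (F G : I -> R) :
  (forall i, p i -> 0 <= F i <= G i) ->
  \big[Rmult/R1]_(i | p i) F i <= \big[Rmult/R1]_(i | p i) G i.
Proof.
move=> H.
suff: 0 <= \big[Rmult/R1]_(i | p i) F i <= \big[Rmult/R1]_(i | p i) G i by case.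
apply: (big_ind2 (fun x y => 0 <= x <= y)) => //; first lra.
by move=> x1 x2 y1 y2 [? ?] [? ?]; split; nra.
Qed.


Lemma sum_pred_const (I : finType) (p : pred I) (c : R) :
  \big[Rplus/R0]_(i | p i) c = INR #|p| * c.
Proof.
rewrite (eq_bigl (fun i => i \in p)) // big_const; elim: #|_| => [|k IH]; first by rewrite /=; lra.
by rewrite iterS IH S_INR; lra.
Qed.

Lemma binbound f a b : (b <= a)%N ->
  ('C(a, b) * (a + f) ^ f <= 'C(a + f, b + f) * (b + f) ^ f)%N.
Proof.
elim: f a b => [|f IH] a b hba; first by rewrite !addn0 !expn0 !muln1.
have IH' := IH a.+1 b.+1 hba.
rewrite -(leq_pmul2l (ltn0Sn a)).
have e : (a.+1 * 'C(a, b) = b.+1 * 'C(a.+1, b.+1))%N by rewrite -mul_bin_diag.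
have ea : (a + f.+1 = a.+1 + f)%N by rewrite addnS addSn.
have eb : (b + f.+1 = b.+1 + f)%N by rewrite addnS addSn.
rewrite ea eb !expnS.
move: IH' e; set X := 'C(a.+1, b.+1); set Y := 'C(a.+1 + f, b.+1 + f);
  set u := ((a.+1 + f) ^ f)%N; set v := ((b.+1 + f) ^ f)%N => IH' e.
have h1 : (b.+1 * (a.+1 + f) <= a.+1 * (b.+1 + f))%N by nia.
have -> : (a.+1 * ('C(a, b) * ((a.+1 + f) * u)) = (b.+1 * (a.+1 + f)) * (X * u))%N.
  by rewrite mulnA e; nia.
have -> : (a.+1 * (Y * ((b.+1 + f) * v)) = (a.+1 * (b.+1 + f)) * (Y * v))%N by nia.
by apply: leq_mul.
Qed.

Lemma INR_expn a k : INR (a ^ k)%N = INR a ^ k.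
Proof. elim: k => [|k IH]; first by rewrite expn0. by rewrite expnS mult_INR IH. Qed.

Lemma INR_muln a b : INR (a * b)%N = INR a * INR b.
Proof. exact: mult_INR. Qed.

Lemma INR_le_nat a b : (a <= b)%N -> INR a <= INR b.
Proof. by move=> h; apply: le_INR; apply/leP. Qed.

Section Prob.
Variables (n m : nat) (P : nat -> R).
Hypothesis HP : is_prob_measure m P.

Definition nu (T : {set 'I_m}) : R := P #|T| / INR 'C(m, #|T|).

Lemma card_le_m (T : {set 'I_m}) : (#|T| <= m)%N.
Proof. by rewrite -[X in (_ <= X)%N](card_ord m) max_card. Qed.

Lemma binR_gt0 k : (k <= m)%N -> 0 < INR 'C(m, k).
Proof. by move=> hk; apply: lt_0_INR; apply/ltP; rewrite bin_gt0. Qed.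

Lemma nu_ge0 T : 0 <= nu T.
Proof.
rewrite /nu; have := binR_gt0 (card_le_m T); have := (proj1 HP) _ (card_le_m T).
move=> h1 h2; apply: Rmult_le_pos => //; left; exact: Rinv_0_lt_compat.
Qed.

Lemma w_ge0 (S : config n m) : 0 <= cfg_weight P S.
Proof. by apply: prod_ge0 => v _; apply: nu_ge0. Qed.

Lemma prob_le (E1 E2 : pred (config n m)) :
  (forall S, E1 S -> E2 S) -> prob P E1 <= prob P E2.
Proof. by move=> H; apply: sum_le_pred => //; exact: w_ge0. Qed.

Lemma prob_ge0 (E : pred (config n m)) : 0 <= prob P E.
Proof. by apply: sum_ge0 => S _; exact: w_ge0. Qed.

Lemma prob_or (E E1 E2 : pred (config n m)) :
  (forall S, E S -> E1 S || E2 S) -> prob P E <= prob P E1 + prob P E2.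
Proof.
move=> H; rewrite /prob (big_mkcond E) (big_mkcond E1) (big_mkcond E2) -big_split /=.
apply: sum_le => S _; have := w_ge0 S; have := H S.
by case: (E S); case: (E1 S); case: (E2 S) => //= h; try lra; have := h isT.
Qed.

Lemma prob_exists (I : finType) (E : I -> pred (config n m)) :
  prob P (fun S => [exists i, E i S]) <= \big[Rplus/R0]_(i : I) prob P (E i).
Proof.
rewrite /prob.
have -> : \big[Rplus/R0]_(i : I) \big[Rplus/R0]_(S | E i S) cfg_weight P S =
   \big[Rplus/R0]_(S : config n m) \big[Rplus/R0]_(i : I) (if E i S then cfg_weight P S else 0).
  rewrite exchange_big /=.
  by apply: eq_bigr => i _; rewrite (big_mkcond (E i)).
rewrite (big_mkcond (fun S => [exists i, E i S])); apply: sum_le => S _.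
case: (boolP [exists i, E i S]) => [/existsP[i Hi]|_].
  rewrite (bigD1 i) //= Hi; have := @sum_ge0 I (fun j => j != i) (fun j => if E j S then cfg_weight P S else 0).
  move=> h; have : 0 <= \big[Rplus/R0]_(j | j != i) (if E j S then cfg_weight P S else 0).
    by apply: h => j _; case: (E j S); [exact: w_ge0| lra].
  lra.
by apply: sum_ge0 => j _; case: (E j S); [exact: w_ge0| lra].
Qed.


Lemma prob_forall (g : 'I_n -> pred {set 'I_m}) :
  prob P (fun S => [forall v, g v (S v)]) =
  \big[Rmult/R1]_(v : 'I_n) \big[Rplus/R0]_(T | g v T) nu T.
Proof.
rewrite /prob /cfg_weight.
transitivity (\big[Rplus/R0]_(S : config n m)
   \big[Rmult/R1]_(v : 'I_n) (if g v (S v) then nu (S v) else 0)).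
  rewrite big_mkcond; apply: eq_bigr => S _.
  case: (boolP [forall v, g v (S v)]) => [/forallP H|/forallPn [v Hv]].
    by apply: eq_bigr => v _; rewrite H.
  by rewrite (bigD1 v) //= (negbTE Hv) Rmult_0_l.
rewrite -(bigA_distr_bigA (fun v T => if g v T then nu T else 0)) /=.
by apply: eq_bigr => v _; rewrite [RHS]big_mkcond; reflexivity.
Qed.

Definition cardo (T : {set 'I_m}) : 'I_m.+1 := @Ordinal m.+1 #|T| (card_le_m T).

Lemma sum_size (f : nat -> R) :
  \big[Rplus/R0]_(T : {set 'I_m}) (nu T * f #|T|) =
  \big[Rplus/R0]_(k < m.+1) (P k * f k).
Proof.
rewrite (partition_big cardo predT) //; apply: eq_bigr => k _.
rewrite (eq_bigr (fun _ => P k / INR 'C(m, k) * f k)); last first.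
  by move=> T /eqP <-; rewrite /nu.
rewrite sum_pred_const.
have -> : #|(fun T : {set 'I_m} => true && (cardo T == k))| = 'C(m, k).
  have := card_draws 'I_m k; rewrite card_ord => <-.
  by apply: eq_card => T; rewrite !inE -topredE /= -val_eqE.
have := binR_gt0 (ltn_ord k : (k <= m)%N) => h; field; lra.
Qed.

Lemma total_nu : \big[Rplus/R0]_(T : {set 'I_m}) nu T = 1.
Proof.
have h := sum_size (fun _ => 1); simpl in h.
rewrite (eq_bigr (fun T => nu T * 1)); last by move=> *; lra.
rewrite h; transitivity (\big[Rplus/R0]_(k < m.+1) P k); [by apply: eq_bigr => k _; lra| exact: (proj2 HP)].
Qed.

Lemma count_sub (F : {set 'I_m}) k :
  (#|[set T : {set 'I_m} | F \subset T & #|T| == k]| * m ^ #|F|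
     <= 'C(m, k) * k ^ #|F|)%N.
Proof.
set D := [set T : {set 'I_m} | F \subset T & #|T| == k].
case: (leqP k m) => hkm; last first.
  rewrite (_ : #|D| = 0)%N // ; apply: eq_card0 => T; rewrite !inE.
  apply/negP => /andP[_ /eqP e]; have := card_le_m T; rewrite e; lia.
case: (leqP #|F| k) => hfk; last first.
  rewrite (_ : #|D| = 0)%N // ; apply: eq_card0 => T; rewrite !inE.
  apply/negP => /andP[/subset_leq_card h /eqP e]; lia.
have hD : (#|D| <= 'C(m - #|F|, k - #|F|))%N.
  have inj : {in D &, injective (fun T => T :\: F)}.
    move=> T1 T2; rewrite !inE => /andP[h1 _] /andP[h2 _] e.
    apply/setP => x; move/setP/(_ x): e; rewrite !inE /=.
    case xF: (x \in F) => /=; last by [].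
    by rewrite (subsetP h1 _ xF) (subsetP h2 _ xF).
  rewrite -(card_in_imset inj).
  have -> : (m - #|F| = #|~: F|)%N by have := cardsC F; rewrite card_ord; lia.
  rewrite -cards_draws; apply: subset_leq_card; apply/subsetP => A /imsetP[T].
  rewrite !inE => /andP[hT /eqP hk] ->; rewrite subsetDr /= cardsD.
  by rewrite (setIidPr hT) hk.
have hb := binbound #|F| (leq_sub2r #|F| hkm).
rewrite !subnK // in hb; last by lia.
apply: leq_trans hb; exact: leq_mul.
Qed.

Lemma sum_sub_bound (F : {set 'I_m}) (g : nat -> R) :
  (0 < m)%N -> (forall k, 0 <= g k) ->
  \big[Rplus/R0]_(T : {set 'I_m} | F \subset T) (nu T * g #|T|) <=
  \big[Rplus/R0]_(k < m.+1) (P k * g k * (INR k / INR m) ^ #|F|).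
Proof.
move=> hm hg.
rewrite (partition_big cardo predT) //; apply: sum_le => k _.
rewrite (eq_bigr (fun _ => P k / INR 'C(m, k) * g k)); last first.
  by move=> T /andP[_ /eqP <-]; rewrite /nu.
rewrite sum_pred_const.
set c := #|_|.
have hc : c = #|[set T : {set 'I_m} | F \subset T & #|T| == k]|.
  by apply: eq_card => T; rewrite !inE -topredE /= -val_eqE.
have hcs := count_sub F k; rewrite -hc in hcs.
have hC := binR_gt0 (ltn_ord k : (k <= m)%N).
have hmR : 0 < INR m by apply: lt_0_INR; apply/ltP.
have hPk : 0 <= P k by apply: (proj1 HP); exact: (ltn_ord k).
have hR : INR c * INR m ^ #|F| <= INR 'C(m, k) * INR k ^ #|F|.
  rewrite -!INR_expn -!INR_muln; exact: INR_le_nat.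
have hmf : 0 < INR m ^ #|F| by apply: pow_lt.
have e1 : INR c * (P k / INR 'C(m, k) * g k) =
   (P k * g k) * ((INR c * INR m ^ #|F|) / (INR 'C(m, k) * INR m ^ #|F|)).
  field; lra.
have e2 : P k * g k * (INR k / INR m) ^ #|F| =
   (P k * g k) * ((INR 'C(m, k) * INR k ^ #|F|) / (INR 'C(m, k) * INR m ^ #|F|)).
  rewrite /Rdiv Rpow_mult_distr pow_inv. field; lra.
rewrite e1 e2; apply: Rmult_le_compat_l; first by have := hg k; nra.
apply: Rmult_le_compat_r => //; left; apply: Rinv_0_lt_compat; nra.
Qed.

End Prob.


Lemma prod_sub (I : finType) (h : I -> R) (s : seq I) :
  uniq s -> (forall i, 0 <= h i) -> (forall i, i \notin s -> h i <= 1) ->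
  \big[Rmult/R1]_(i : I) h i <= \big[Rmult/R1]_(i <- s) h i.
Proof.
move=> us h0 h1.
rewrite (bigID (fun i => i \in s)) /= (big_uniq _ us).
have a0 : 0 <= \big[Rmult/R1]_(i in s) h i by apply: prod_ge0.
have b0 : 0 <= \big[Rmult/R1]_(i | i \notin s) h i by apply: prod_ge0.
have b1 : \big[Rmult/R1]_(i | i \notin s) h i <= \big[Rmult/R1]_(i | i \notin s) 1.
  by apply: prod_le => i hi; split; [apply: h0| apply: h1].
have e1 : \big[Rmult/R1]_(i | i \notin s) (1:R) = 1 by rewrite big1.
rewrite e1 in b1.
rewrite -[X in _ <= X]Rmult_1_r; apply: Rmult_le_compat_l => //.
Qed.

Lemma sum_ord_le k (F : 'I_k -> R) c :
  0 <= c -> (forall i, F i <= c) -> \big[Rplus/R0]_(i < k) F i <= INR k * c.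
Proof.
move=> c0 h; rewrite -[X in INR X](card_ord k).
exact: (sum_le_const (p := predT) c0 (fun i _ => h i)).
Qed.

Section Tools.
Variables (n m : nat) (P : nat -> R).
Hypothesis HP : is_prob_measure m P.
Hypothesis hm : (0 < m)%N.

Lemma prob_pred0 : prob P (fun _ : config n m => false) = 0.
Proof. by rewrite /prob big_pred0. Qed.

Lemma prob_cond (c : bool) (E : pred (config n m)) B :
  0 <= B -> (c -> prob P E <= B) -> prob P (fun S => c && E S) <= B.
Proof.
case: c => h0 h /=; first by apply: h.
by rewrite prob_pred0.
Qed.

Lemma prob_exists_ord k (E : 'I_k -> pred (config n m)) c :
  0 <= c -> (forall i, prob P (E i) <= c) ->
  prob P (fun S => [exists i, E i S]) <= INR k * c.
Proof.
move=> c0 h; apply: Rle_trans (prob_exists HP E) _; exact: sum_ord_le.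
Qed.

Lemma sum_nu_le1 (q : pred {set 'I_m}) : \big[Rplus/R0]_(T | q T) nu P T <= 1.
Proof.
rewrite -(total_nu HP); apply: sum_le_pred => //; exact: nu_ge0.
Qed.

Lemma prob_pattern (s : seq 'I_n) (pat : 'I_n -> pred {set 'I_m}) :
  uniq s ->
  prob P (fun S : config n m => all (fun x => pat x (S x)) s) <=
  \big[Rmult/R1]_(x <- s) \big[Rplus/R0]_(T | pat x T) nu P T.
Proof.
move=> us.
apply: Rle_trans (prob_le HP (E2 := fun S => [forall x, (x \in s) ==> pat x (S x)]) _) _.
  by move=> S /allP h; apply/forallP => x; apply/implyP => /h.
rewrite (prob_forall P (fun x T => (x \in s) ==> pat x T)).
apply: Rle_trans (@prod_sub _ (fun x => \big[Rplus/R0]_(T | (x \in s) ==> pat x T) nu P T) s us _ _) _.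
- by move=> i; apply: sum_ge0 => *; exact: nu_ge0.
- by move=> i _; apply: sum_nu_le1.
rewrite (eq_big_seq (fun x => \big[Rplus/R0]_(T | pat x T) nu P T)); first by right.
by move=> x xs; apply: eq_bigl => T; rewrite xs.
Qed.

Definition M2 := \big[Rplus/R0]_(k < m.+1) (P k * (INR k / INR m) ^ 2).

Lemma marg2 (w u : 'I_m) : w != u ->
  \big[Rplus/R0]_(T : {set 'I_m} | (w \in T) && (u \in T)) nu P T <= M2.
Proof.
move=> wu.
have := sum_sub_bound HP [set w; u] (g := fun _ => 1) hm (fun _ => Rle_0_1).
rewrite cards2 wu /=.
have -> : \big[Rplus/R0]_(T : {set 'I_m} | [set w; u] \subset T) (nu P T * 1) =
          \big[Rplus/R0]_(T : {set 'I_m} | (w \in T) && (u \in T)) nu P T.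
  apply: eq_big => [T|T _]; last by lra.
  by rewrite subUset !sub1set.
move=> h; apply: Rle_trans h _; right; apply: eq_bigr => k _; lra.
Qed.

Definition M3s (sm : pred nat) :=
  \big[Rplus/R0]_(k < m.+1) (P k * (if sm k then (INR k / INR m) ^ 3 else 0)).

Lemma marg3s (sm : pred nat) (a b c : 'I_m) : a != b -> a != c -> b != c ->
  \big[Rplus/R0]_(T : {set 'I_m} | [&& a \in T, b \in T, c \in T & sm #|T|]) nu P T
  <= M3s sm.
Proof.
move=> ab ac bc.
have g0 : forall k, 0 <= (if sm k then 1 else 0) by move=> k; case: (sm k); lra.
have := sum_sub_bound HP [set a; b; c] hm g0.
have -> : #|[set a; b; c]| = 3%N.
  by rewrite setUC cardsU1 cards2 ab !inE negb_or ![c == _]eq_sym ac bc.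
have -> : \big[Rplus/R0]_(T : {set 'I_m} | [set a; b; c] \subset T)
     (nu P T * (if sm #|T| then 1 else 0)) =
   \big[Rplus/R0]_(T : {set 'I_m} | [&& a \in T, b \in T, c \in T & sm #|T|]) nu P T.
  rewrite [RHS]big_mkcond [LHS]big_mkcond; apply: eq_bigr => T _.
  rewrite !subUset !sub1set.
  by case: (a \in T); case: (b \in T); case: (c \in T); case: (sm #|T|) => /=; lra.
move=> h; apply: Rle_trans h _; right; apply: eq_bigr => k _.
by case: (sm k); lra.
Qed.

End Tools.


Ltac posR := repeat (first [ apply pos_INR | assumption | apply Rmult_le_pos | apply Rplus_le_le_0_compat | apply pow_le ]).

Section Part1.
Variables (n m : nat) (P : nat -> R).
Hypothesis HP : is_prob_measure m P.
Hypothesis hm : (0 < m)%N.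

Lemma M2_ge0 : 0 <= M2 m P.
Proof.
apply: sum_ge0 => k _; apply: Rmult_le_pos; first by apply: (proj1 HP); exact: (ltn_ord k).
apply: pow_le; apply: Rmult_le_pos; [exact: pos_INR|].
by left; apply: Rinv_0_lt_compat; apply: lt_0_INR; apply/ltP.
Qed.

Lemma prob_pairdef (v : 'I_n) :
  prob P (fun S : config n m => pairdef S v) <=
  INR n * (INR m * (INR m * (M2 m P * M2 m P))).
Proof.
have h2 := M2_ge0.
have c0 : 0 <= M2 m P * M2 m P by nra.
apply: (prob_exists_ord HP); [posR| move=> u].
apply: prob_cond; [posR| move=> uv].
apply: (prob_exists_ord HP); [posR| move=> w1].
apply: (prob_exists_ord HP); [posR| move=> w2].
apply: Rle_trans (prob_le HP (E2 := fun S : config n m => (w1 != w2) &&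
   all (fun x => (fun T : {set 'I_m} => (w1 \in T) && (w2 \in T)) (S x)) [:: u; v]) _) _.
  by move=> S /and5P[-> a b c d] /=; rewrite a b c d.
apply: prob_cond; [posR| move=> w12].
apply: Rle_trans (prob_pattern HP (fun _ (T : {set 'I_m}) => (w1 \in T) && (w2 \in T)) _) _.
  by rewrite /= inE uv.
rewrite !big_cons big_nil /= Rmult_1_r.
have := marg2 HP hm w12; have := @sum_ge0 _ (fun T : {set 'I_m} => (w1 \in T) && (w2 \in T)) (nu P) (fun T _ => nu_ge0 HP T).
move=> a b; apply: Rmult_le_compat => //.
Qed.


Lemma prob_tridef (v : 'I_n) :
  prob P (fun S : config n m => tridef S v) <=
  INR n * (INR n * (INR m * (INR m * (INR m * (M2 m P * (M2 m P * M2 m P)))))).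
Proof.
have h2 := M2_ge0.
have c0 : 0 <= M2 m P * M2 m P by nra.
have c1 : 0 <= M2 m P * (M2 m P * M2 m P) by nra.
apply: (prob_exists_ord HP); [posR| move=> u].
apply: (prob_exists_ord HP); [posR| move=> z].
apply: prob_cond; [posR| move=> uv].
apply: prob_cond; [posR| move=> zv].
apply: prob_cond; [posR| move=> uz].
apply: (prob_exists_ord HP); [posR| move=> w1].
apply: (prob_exists_ord HP); [posR| move=> w2].
apply: (prob_exists_ord HP); [posR| move=> w3].
set pat := fun x (T : {set 'I_m}) => if x == v then (w1 \in T) && (w3 \in T)
   else if x == u then (w1 \in T) && (w2 \in T) else (w2 \in T) && (w3 \in T).
apply: Rle_trans (prob_le HP (E2 := fun S : config n m =>
   [&& w1 != w2, w2 != w3, w1 != w3 &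
   all (fun x => pat x (S x)) [:: v; u; z]]) _) _.
  move=> S /andP[-> /andP[-> /andP[-> /andP[a /andP[b /andP[c /andP[d /andP[e f]]]]]]]] /=; rewrite /pat eqxx (negbTE uv) (negbTE zv).
  by rewrite eqxx (eq_sym z u) (negbTE uz) a b c d e f.
apply: prob_cond; [posR| move=> n12]. apply: prob_cond; [posR| move=> n23]. apply: prob_cond; [posR| move=> n13].
apply: Rle_trans (prob_pattern HP pat _) _.
  by rewrite /= !inE negb_or !(eq_sym v) uv zv uz.
rewrite !big_cons big_nil /= Rmult_1_r /pat eqxx (negbTE uv) (negbTE zv) eqxx (eq_sym z u) (negbTE uz).
have g0 := fun q => @sum_ge0 _ q (nu P) (fun T _ => nu_ge0 HP T).
apply: Rmult_le_compat; [exact: g0| apply: Rmult_le_pos; exact: g0| exact: marg2 | ].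
apply: Rmult_le_compat; [exact: g0| exact: g0| exact: marg2 | exact: marg2].
Qed.


Lemma markov_bad (K : nat) :
  INR K * prob P (fun S : config n m => (K <= #|Bad S|)%N) <=
  \big[Rplus/R0]_(v < n) prob P (fun S : config n m => v \in Bad S).
Proof.
rewrite /prob big_distrr /=.
have -> : \big[Rplus/R0]_(v < n) \big[Rplus/R0]_(S : config n m | v \in Bad S) cfg_weight P S =
   \big[Rplus/R0]_(S : config n m) (INR #|Bad S| * cfg_weight P S).
  under eq_bigr => v _ do rewrite big_mkcond.
  rewrite exchange_big /=; apply: eq_bigr => S _.
  by rewrite -big_mkcond sum_pred_const; congr (INR _ * _); apply: eq_card => v; rewrite -topredE /= inE.
apply: Rle_trans (sum_le (G := fun S => INR #|Bad S| * cfg_weight P S) _) _.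
  move=> S hS; apply: Rmult_le_compat_r; first exact: w_ge0.
  exact: INR_le_nat.
apply: sum_le_pred => // S; apply: Rmult_le_pos; [exact: pos_INR| exact: w_ge0].
Qed.

Lemma part1_bound (K : nat) : (0 < K)%N ->
  INR K * prob P (fun S : config n m =>
            (clique_number S > omega' S + K)%N
            || (omega' S > clique_number S + K)%N) <=
  INR n * (INR n * (INR m * (INR m * (M2 m P * M2 m P))) +
           INR n * (INR n * (INR m * (INR m * (INR m * (M2 m P * (M2 m P * M2 m P))))))).
Proof.
move=> K0.
have hK : 0 <= INR K by exact: pos_INR.
apply: Rle_trans (_ : INR K * prob P (fun S : config n m => (K <= #|Bad S|)%N) <= _).
  apply: Rmult_le_compat_l => //; apply: prob_le => // S.
  have h1 := part1_det S; have h2 := omega'_le S.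
  case/orP => h; lia.
apply: Rle_trans (markov_bad K) _.
apply: Rle_trans (sum_le (G := fun v => prob P (fun S : config n m => pairdef S v) +
                                        prob P (fun S : config n m => tridef S v)) _) _.
  move=> v _; apply: prob_or => // S; by rewrite inE.
rewrite -[X in _ <= INR X * _](card_ord n); apply: sum_le_const.
  have h := M2_ge0; posR.
move=> v _; apply: Rplus_le_compat; [exact: prob_pairdef| exact: prob_tridef].
Qed.

End Part1.



Section Part2.
Variables (n m : nat) (P : nat -> R).
Hypothesis HP : is_prob_measure m P.
Hypothesis hm : (0 < m)%N.

Definition snu (q : pred {set 'I_m}) := \big[Rplus/R0]_(T | q T) nu P T.

Lemma snu_ge0 q : 0 <= snu q.
Proof. by apply: sum_ge0 => T _; exact: nu_ge0. Qed.

Lemma prob4 (x1 x2 x3 x4 : 'I_n) (P1 P2 P3 P4 : pred {set 'I_m}) (E : pred (config n m)) :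
  uniq [:: x1; x2; x3; x4] ->
  (forall S, E S -> [&& P1 (S x1), P2 (S x2), P3 (S x3) & P4 (S x4)]) ->
  prob P E <= snu P1 * (snu P2 * (snu P3 * snu P4)).
Proof.
move=> us hE.
set pat := fun x (T : {set 'I_m}) => [&& (x == x1) ==> P1 T, (x == x2) ==> P2 T,
   (x == x3) ==> P3 T & (x == x4) ==> P4 T].
apply: Rle_trans (prob_le HP (E2 := fun S : config n m => all (fun x => pat x (S x)) [:: x1; x2; x3; x4]) _) _.
  move=> S /hE /and4P[h1 h2 h3 h4]; apply/allP => x _; rewrite /pat.
  by apply/and4P; split; apply/implyP => /eqP ->.
apply: Rle_trans (prob_pattern HP pat us) _.
rewrite !big_cons big_nil Rmult_1_r.
have le : forall (x : 'I_n) (Q : pred {set 'I_m}), (forall T, pat x T -> Q T) ->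
    0 <= \big[Rplus/R0]_(T | pat x T) nu P T <= snu Q.
  move=> x Q hQ; split; first by apply: sum_ge0 => *; exact: nu_ge0.
  by apply: sum_le_pred => //; exact: nu_ge0.
have [a1 b1] : 0 <= \big[Rplus/R0]_(T | pat x1 T) nu P T <= snu P1.
  by apply: le => T; rewrite /pat eqxx => /and4P[h _ _ _].
have [a2 b2] : 0 <= \big[Rplus/R0]_(T | pat x2 T) nu P T <= snu P2.
  by apply: le => T; rewrite /pat eqxx => /and4P[_ h _ _].
have [a3 b3] : 0 <= \big[Rplus/R0]_(T | pat x3 T) nu P T <= snu P3.
  by apply: le => T; rewrite /pat eqxx => /and4P[_ _ h _].
have [a4 b4] : 0 <= \big[Rplus/R0]_(T | pat x4 T) nu P T <= snu P4.
  by apply: le => T; rewrite /pat eqxx => /and4P[_ _ _ h].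
have := snu_ge0 P1; have := snu_ge0 P2; have := snu_ge0 P3; have := snu_ge0 P4 => c4 c3 c2 c1.
apply: Rmult_le_compat => //; first by posR.
apply: Rmult_le_compat => //; first by posR.
exact: Rmult_le_compat.
Qed.


Lemma snu_size (q : pred nat) :
  snu (fun T => q #|T|) = \big[Rplus/R0]_(k < m.+1 | q k) P k.
Proof.
rewrite /snu big_mkcond.
rewrite (eq_bigr (fun T => nu P T * (if q #|T| then 1 else 0))); last first.
  by move=> T _; case: (q #|T|); lra.
rewrite (sum_size m P (fun k => if q k then 1 else 0)) [RHS]big_mkcond; apply: eq_bigr => k _; case: (q k); lra.
Qed.

Definition Fi (u : 'I_m) (T : {set 'I_m}) : R := if u \in T then 1 else 0.

Lemma sumF (T : {set 'I_m}) (c : R) :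
  \big[Rplus/R0]_(u : 'I_m) (Fi u T * c) = INR #|T| * c.
Proof.
rewrite (eq_bigr (fun u => if u \in T then c else 0)); last first.
  by move=> u _; rewrite /Fi; case: (u \in T); lra.
rewrite -big_mkcond sum_pred_const; congr (INR _ * _).
Qed.

Lemma zsum (sm : pred nat) :
  \big[Rplus/R0]_(u1 : 'I_m) \big[Rplus/R0]_(u2 : 'I_m) \big[Rplus/R0]_(u3 : 'I_m)
    snu (fun T => [&& u1 \in T, u2 \in T, u3 \in T & sm #|T|]) =
  \big[Rplus/R0]_(k < m.+1) (P k * (if sm k then INR k ^ 3 else 0)).
Proof.
set g := fun T : {set 'I_m} => if sm #|T| then nu P T else 0.
have e1 : forall u1 u2 u3, snu (fun T => [&& u1 \in T, u2 \in T, u3 \in T & sm #|T|]) =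
   \big[Rplus/R0]_(T : {set 'I_m}) (Fi u1 T * (Fi u2 T * (Fi u3 T * g T))).
  move=> u1 u2 u3; rewrite /snu big_mkcond; apply: eq_bigr => T _.
  rewrite /Fi /g; case: (u1 \in T); case: (u2 \in T); case: (u3 \in T); case: (sm #|T|) => /=; lra.
under eq_bigr => u1 _ do under eq_bigr => u2 _ do under eq_bigr => u3 _ do rewrite e1.
under eq_bigr => u1 _ do under eq_bigr => u2 _ do rewrite exchange_big.
under eq_bigr => u1 _ do rewrite exchange_big.
rewrite exchange_big /=.
rewrite (eq_bigr (fun T => nu P T * (if sm #|T| then INR #|T| ^ 3 else 0))); last first.
  move=> T _.
  under eq_bigr => u1 _ do under eq_bigr => u2 _ do rewrite -!big_distrr /= sumF.
  under eq_bigr => u1 _ do rewrite -big_distrr /= sumF.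
  rewrite sumF /g; case: (sm #|T|) => /=; lra.
exact: (sum_size m P (fun k => if sm k then INR k ^ 3 else 0)).
Qed.


Definition Q3 (sm : pred nat) :=
  \big[Rplus/R0]_(k < m.+1) (P k * (if sm k then INR k ^ 3 else 0)).

Lemma Q3_ge0 sm : 0 <= Q3 sm.
Proof.
apply: sum_ge0 => k _; apply: Rmult_le_pos; first by apply: (proj1 HP); exact: (ltn_ord k).
by case: (sm k); [apply: pow_le; exact: pos_INR| lra].
Qed.

Lemma M3s_ge0 sm : 0 <= M3s m P sm.
Proof.
apply: sum_ge0 => k _; apply: Rmult_le_pos; first by apply: (proj1 HP); exact: (ltn_ord k).
case: (sm k); last lra. apply: pow_le; apply: Rmult_le_pos; [exact: pos_INR|].
by left; apply: Rinv_0_lt_compat; apply: lt_0_INR; apply/ltP.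
Qed.

Lemma prob_notgood (sm : pred nat) :
  prob P (fun S : config n m => ~~ [forall v, sm #|S v|]) <=
  INR n * \big[Rplus/R0]_(k < m.+1 | ~~ sm k) P k.
Proof.
apply: Rle_trans (prob_le HP (E2 := fun S : config n m => [exists v, ~~ sm #|S v|]) _) _.
  by move=> S; rewrite negb_forall.
rewrite -(snu_size (fun k => ~~ sm k)).
apply: (prob_exists_ord HP); [exact: snu_ge0| move=> v].
apply: Rle_trans (prob_le HP (E2 := fun S : config n m =>
   all (fun x => (fun T : {set 'I_m} => ~~ sm #|T|) (S x)) [:: v]) _) _.
  by move=> S /= ->.
apply: Rle_trans (prob_pattern HP (fun _ (T : {set 'I_m}) => ~~ sm #|T|) _) _ => //.
by rewrite big_cons big_nil Rmult_1_r; right.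
Qed.

Lemma prob_bad1 (sm : pred nat) :
  prob P (fun S : config n m => bad1 S && [forall v, sm #|S v|]) <=
  INR m * (INR n * (INR n * (INR n * (INR n *
     (M2 m P * (M2 m P * M2 m P) * Q3 sm))))).
Proof.
have h2 := M2_ge0 HP hm.
have hQ := Q3_ge0 sm.
have c3 : 0 <= M2 m P * (M2 m P * M2 m P) by posR.
apply: Rle_trans (prob_le HP (E2 := fun S : config n m =>
  [exists w, [exists z, [exists a1, [exists a2, [exists a3,
  [exists u1, [exists u2, [exists u3,
    bad1c w z a1 a2 a3 u1 u2 u3 && (bad1m S w z a1 a2 a3 u1 u2 u3 && sm #|S z|)]]]]]]]]) _) _.
  move=> S /andP[/existsP[w /existsP[z /existsP[a1 /existsP[a2 /existsP[a3
     /existsP[u1 /existsP[u2 /existsP[u3 /andP[hc hm']]]]]]]]] /forallP hg].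
  apply/existsP; exists w; apply/existsP; exists z; apply/existsP; exists a1.
  apply/existsP; exists a2; apply/existsP; exists a3; apply/existsP; exists u1.
  apply/existsP; exists u2; apply/existsP; exists u3; by rewrite hc hm' hg.
apply: (prob_exists_ord HP); [posR| move=> w].
apply: (prob_exists_ord HP); [posR| move=> z].
apply: (prob_exists_ord HP); [posR| move=> a1].
apply: (prob_exists_ord HP); [posR| move=> a2].
apply: (prob_exists_ord HP); [posR| move=> a3].
set zp := fun (u1 u2 u3 : 'I_m) (T : {set 'I_m}) => [&& u1 \in T, u2 \in T, u3 \in T & sm #|T|].
have point : forall u1 u2 u3,
   prob P (fun S : config n m =>
     bad1c w z a1 a2 a3 u1 u2 u3 && (bad1m S w z a1 a2 a3 u1 u2 u3 && sm #|S z|))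
   <= M2 m P * (M2 m P * M2 m P) * snu (zp u1 u2 u3).
  move=> u1 u2 u3; apply: prob_cond; first by apply: Rmult_le_pos => //; exact: snu_ge0.
  move=> /and3P[d12 d13 /and3P[d23 dz1 /and3P[dz2 dz3 /and3P[uw1 uw2 uw3]]]].
  apply: Rle_trans (prob4 (x1 := z) (x2 := a1) (x3 := a2) (x4 := a3)
     (P1 := zp u1 u2 u3) (P2 := fun T => (w \in T) && (u1 \in T))
     (P3 := fun T => (w \in T) && (u2 \in T)) (P4 := fun T => (w \in T) && (u3 \in T)) _ _) _.
  - by rewrite /= !inE !negb_or dz1 dz2 dz3 d12 d13 d23.
  - move=> S /andP[/and3P[e1 e2 /and3P[e3 e4 /and3P[e5 e6 /and3P[e7 e8 e9]]]] es].
    by rewrite /zp e1 e2 e3 e4 e5 e6 e7 e8 e9 es.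
  have hz := snu_ge0 (zp u1 u2 u3).
  have m1 := marg2 HP hm (ltac:(by rewrite eq_sym) : w != u1).
  have m2 := marg2 HP hm (ltac:(by rewrite eq_sym) : w != u2).
  have m3 := marg2 HP hm (ltac:(by rewrite eq_sym) : w != u3).
  have s1 := snu_ge0 (fun T => (w \in T) && (u1 \in T)).
  have s2 := snu_ge0 (fun T => (w \in T) && (u2 \in T)).
  have s3 := snu_ge0 (fun T => (w \in T) && (u3 \in T)).
  rewrite /snu in m1 m2 m3 s1 s2 s3 *.
  rewrite [X in _ <= X]Rmult_comm.
  apply: Rmult_le_compat_l => //.
  apply: Rmult_le_compat => //; first by posR.
  exact: Rmult_le_compat.
apply: Rle_trans (prob_exists HP _) _.
apply: Rle_trans (sum_le (G := fun u1 => \big[Rplus/R0]_(u2 : 'I_m) \big[Rplus/R0]_(u3 : 'I_m)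
     (M2 m P * (M2 m P * M2 m P) * snu (zp u1 u2 u3))) _) _.
  move=> u1 _; apply: Rle_trans (prob_exists HP _) _; apply: sum_le => u2 _.
  by apply: Rle_trans (prob_exists HP _) _; apply: sum_le => u3 _; apply: point.
right.
under eq_bigr => u1 _ do under eq_bigr => u2 _ do rewrite -big_distrr /=.
under eq_bigr => u1 _ do rewrite -big_distrr /=.
by rewrite -big_distrr /= zsum.
Qed.


Lemma prob_bad2 (sm : pred nat) :
  prob P (fun S : config n m => bad2 S && [forall v, sm #|S v|]) <=
  INR n * (INR n * (INR n * (INR n * (INR m * (INR m * (INR m * (INR m * (INR m * (INR m *
    (M3s m P sm * (M3s m P sm * (M3s m P sm * M3s m P sm)))))))))))).
Proof.
have h3 := M3s_ge0 sm.
apply: Rle_trans (prob_le HP (E2 := fun S : config n m =>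
  [exists v1, [exists v2, [exists v3, [exists v4,
  [exists w12, [exists w13, [exists w14, [exists w23, [exists w24, [exists w34,
    bad2c v1 v2 v3 v4 w12 w13 w14 w23 w24 w34 &&
    (bad2m S v1 v2 v3 v4 w12 w13 w14 w23 w24 w34 &&
     [&& sm #|S v1|, sm #|S v2|, sm #|S v3| & sm #|S v4|])]]]]]]]]]]) _) _.
  move=> S /andP[/existsP[v1 /existsP[v2 /existsP[v3 /existsP[v4 /existsP[w12 /existsP[w13
     /existsP[w14 /existsP[w23 /existsP[w24 /existsP[w34 /andP[hc hm']]]]]]]]]]] /forallP hg].
  apply/existsP; exists v1; apply/existsP; exists v2; apply/existsP; exists v3.
  apply/existsP; exists v4; apply/existsP; exists w12; apply/existsP; exists w13.
  apply/existsP; exists w14; apply/existsP; exists w23; apply/existsP; exists w24.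
  apply/existsP; exists w34; by rewrite hc hm' !hg.
apply: (prob_exists_ord HP); [posR| move=> v1].
apply: (prob_exists_ord HP); [posR| move=> v2].
apply: (prob_exists_ord HP); [posR| move=> v3].
apply: (prob_exists_ord HP); [posR| move=> v4].
apply: (prob_exists_ord HP); [posR| move=> w12].
apply: (prob_exists_ord HP); [posR| move=> w13].
apply: (prob_exists_ord HP); [posR| move=> w14].
apply: (prob_exists_ord HP); [posR| move=> w23].
apply: (prob_exists_ord HP); [posR| move=> w24].
apply: (prob_exists_ord HP); [posR| move=> w34].
apply: prob_cond; first by posR.
move=> /andP[/and3P[d12 d13 /and3P[d14 d23 /andP[d24 d34]]]
  /and3P[a1 a2 /and3P[a3 a4 /and3P[a5 a6 /and3P[a7 a8 /and3P[a9 a10 /andP[a11 a12]]]]]]].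
apply: Rle_trans (prob4 (x1 := v1) (x2 := v2) (x3 := v3) (x4 := v4)
   (P1 := fun T => [&& w12 \in T, w13 \in T, w14 \in T & sm #|T|])
   (P2 := fun T => [&& w12 \in T, w23 \in T, w24 \in T & sm #|T|])
   (P3 := fun T => [&& w13 \in T, w23 \in T, w34 \in T & sm #|T|])
   (P4 := fun T => [&& w14 \in T, w24 \in T, w34 \in T & sm #|T|]) _ _) _.
- by rewrite /= !inE !negb_or d12 d13 d14 d23 d24 d34.
- move=> S /andP[/and3P[e1 e2 /and3P[e3 e4 /and3P[e5 e6 /and3P[e7 e8 /and3P[e9 e10 /andP[e11 e12]]]]]]
     /and4P[s1 s2 s3 s4]].
  by rewrite e1 e2 e3 e4 e5 e6 e7 e8 e9 e10 e11 e12 s1 s2 s3 s4.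
have m1 := marg3s HP hm sm a1 a2 a3.
have m2 := marg3s HP hm sm a4 a5 a6.
have m3 := marg3s HP hm sm a7 a8 a9.
have m4 := marg3s HP hm sm a10 a11 a12.
have := snu_ge0 (fun T => [&& w12 \in T, w13 \in T, w14 \in T & sm #|T|]).
have := snu_ge0 (fun T => [&& w12 \in T, w23 \in T, w24 \in T & sm #|T|]).
have := snu_ge0 (fun T => [&& w13 \in T, w23 \in T, w34 \in T & sm #|T|]).
have := snu_ge0 (fun T => [&& w14 \in T, w24 \in T, w34 \in T & sm #|T|]).
rewrite /snu => s4 s3 s2 s1.
apply: Rmult_le_compat => //; first by posR.
apply: Rmult_le_compat => //; first by posR.
exact: Rmult_le_compat.
Qed.

End Part2.


Lemma nat_above x : exists K : nat, x < INR K.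
Proof.
destruct (archimed x) as [h _].
destruct (Z_lt_le_dec (up x) 0) as [l|l].
- exists 0%N; apply IZR_lt in l; simpl; lra.
- exists (Z.to_nat (up x)); rewrite INR_IZR_INZ Z2Nat.id; [lra|assumption].
Qed.

Section Final.
Variables (n m : nat) (P : nat -> R).
Hypothesis HP : is_prob_measure m P.
Hypothesis hm : (0 < m)%N.

Lemma mR : 1 <= INR m.
Proof. by apply: (INR_le_nat (a := 1)). Qed.

Lemma EY2_M2 : EY2 n m P = INR n * INR m * M2 m P.
Proof.
have hm' := mR.
rewrite /EY2 /Yscale pow2_sqrt; last first.
  by apply: Rmult_le_pos; [exact: pos_INR| left; apply: Rinv_0_lt_compat; lra].
rewrite /M2 !big_distrr /=; apply: eq_bigr => k _.
rewrite /Rdiv; field; lra.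
Qed.

Lemma EY2_le B1 B2 : Rabs (EY n m P) <= B1 -> Rabs (VarY n m P) <= B2 ->
  INR n * INR m * M2 m P <= B2 + B1 ^ 2.
Proof.
rewrite -EY2_M2 /VarY => h1 h2.
have a1 := Rle_abs (EY n m P); have a2 := Rle_abs (- EY n m P); rewrite Rabs_Ropp in a2.
have a3 := Rle_abs (EY2 n m P - EY n m P ^ 2).
nra.
Qed.


Lemma part1_n (K : nat) A0 : (0 < K)%N -> INR n * INR m * M2 m P <= A0 ->
  INR K * prob P (fun S : config n m =>
            (clique_number S > omega' S + K)%N
            || (omega' S > clique_number S + K)%N) <= A0 ^ 2 + A0 ^ 3.
Proof.
move=> K0 hA; apply: Rle_trans (part1_bound n HP hm K0) _.
have h2 := M2_ge0 HP hm.
have hA0 : 0 <= INR n * INR m * M2 m P by posR.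
set A := INR n * INR m * M2 m P in hA hA0.
have e : INR n * (INR n * (INR m * (INR m * (M2 m P * M2 m P))) +
   INR n * (INR n * (INR m * (INR m * (INR m * (M2 m P * (M2 m P * M2 m P))))))) = A ^ 2 + A ^ 3
   by rewrite /A; ring.
rewrite e.
have : A ^ 2 <= A0 ^ 2 by apply: pow_incr.
have : A ^ 3 <= A0 ^ 3 by apply: pow_incr.
lra.
Qed.

Definition smk (t : R) (k : nat) : bool := ~~ Rltb t (Yscale n m * INR k).

Lemma smk_bound e k : 0 < e -> (0 < n)%N -> smk (e * sqrt (INR n)) k -> INR k <= e * sqrt (INR m).
Proof.
move=> he hn; rewrite /smk /Rltb; case: (Rlt_dec _ _) => // h _.
have h1 := Rnot_lt_le _ _ h.
have hnR : 0 < INR n by apply: lt_0_INR; apply/ltP.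
have hmR := mR.
have sn : 0 < sqrt (INR n) by apply: sqrt_lt_R0.
have sm' : 0 < sqrt (INR m) by apply: sqrt_lt_R0; lra.
move: h1; rewrite /Yscale sqrt_div_alt; last lra.
move=> h1.
have h2 : sqrt (INR n) * INR k <= e * sqrt (INR n) * sqrt (INR m).
  have -> : sqrt (INR n) * INR k = sqrt (INR n) / sqrt (INR m) * INR k * sqrt (INR m) by field; lra.
  by apply: Rmult_le_compat_r; lra.
have h3 : sqrt (INR n) * (INR k - e * sqrt (INR m)) <= 0 by nra.
nra.
Qed.


Lemma Pk_ge0 (k : 'I_m.+1) : 0 <= P k.
Proof. by apply: (proj1 HP); exact: (ltn_ord k). Qed.

Lemma Q3_le e : 0 < e -> (0 < n)%N ->
  Q3 m P (smk (e * sqrt (INR n))) <= e * sqrt (INR m) * (INR m ^ 2 * M2 m P).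
Proof.
move=> he hn; have hmR := mR.
rewrite /Q3 /M2 -Rmult_assoc big_distrr; apply: sum_le => k _.
change (P k * (if smk (e * sqrt (INR n)) k then INR k ^ 3 else 0) <=
  e * sqrt (INR m) * INR m ^ 2 * (P k * (INR k / INR m) ^ 2)).
have hP := Pk_ge0 k; have hk0 := pos_INR k.
case hs: (smk _ k); last first.
  rewrite Rmult_0_r; repeat first [apply Rmult_le_pos | apply sqrt_pos | apply pow2_ge_0 | assumption | (apply Rlt_le; apply Rinv_0_lt_compat; lra) | lra].
have hk := smk_bound he hn hs.
have -> : e * sqrt (INR m) * INR m ^ 2 * (P k * (INR k / INR m) ^ 2) =
   P k * INR k ^ 2 * (e * sqrt (INR m)) by field; lra.
have -> : P k * INR k ^ 3 = P k * INR k ^ 2 * INR k by ring.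
apply: Rmult_le_compat_l => //; apply: Rmult_le_pos => //; apply: pow2_ge_0.
Qed.

Lemma M3_le e : 0 < e -> (0 < n)%N ->
  M3s m P (smk (e * sqrt (INR n))) <= e * sqrt (INR m) / INR m * M2 m P.
Proof.
move=> he hn; have hmR := mR.
rewrite /M3s /M2 big_distrr; apply: sum_le => k _.
change (P k * (if smk (e * sqrt (INR n)) k then (INR k / INR m) ^ 3 else 0) <=
  e * sqrt (INR m) / INR m * (P k * (INR k / INR m) ^ 2)).
have hP := Pk_ge0 k; have hk0 := pos_INR k.
have hc : 0 <= e * sqrt (INR m) / INR m.
  apply: Rmult_le_pos; [apply: Rmult_le_pos; [lra| apply: sqrt_pos]| left; apply: Rinv_0_lt_compat; lra].
case hs: (smk _ k); last first.
  rewrite Rmult_0_r; repeat first [apply Rmult_le_pos | apply sqrt_pos | apply pow2_ge_0 | assumption | (apply Rlt_le; apply Rinv_0_lt_compat; lra) | lra].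
have hk := smk_bound he hn hs.
have -> : P k * (INR k / INR m) ^ 3 = P k * (INR k / INR m) ^ 2 * (INR k / INR m) by ring.
have -> : e * sqrt (INR m) / INR m * (P k * (INR k / INR m) ^ 2) =
  P k * (INR k / INR m) ^ 2 * (e * sqrt (INR m) / INR m) by ring.
apply: Rmult_le_compat_l; first by apply: Rmult_le_pos => //; apply: pow2_ge_0.
rewrite /Rdiv; apply: Rmult_le_compat_r => //; left; apply: Rinv_0_lt_compat; lra.
Qed.


Lemma part2_n e : 0 < e -> (0 < n)%N ->
  prob P (fun S : config n m => ~~ (clique_number S <= maxn 3 (omega' S + 3))%N) <=
  INR n * probY_gt n m P (e * sqrt (INR n)) + (e + e ^ 4) * (INR n * INR m * M2 m P) ^ 4.
Proof.
move=> he hn.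
have hmR := mR.
have h2 := M2_ge0 HP hm.
set sm := smk (e * sqrt (INR n)).
apply: Rle_trans (prob_or HP (E1 := fun S : config n m => ~~ [forall v, sm #|S v|])
   (E2 := fun S : config n m => (bad1 S && [forall v, sm #|S v|]) || (bad2 S && [forall v, sm #|S v|])) _) _.
  move=> S h; have : bad1 S || bad2 S.
    case: (boolP (bad1 S || bad2 S)) => // /norP [b1 b2]; exfalso.
    have hc := part2_det b1 b2; move/negP: h; apply; apply: leq_trans hc _.
    rewrite geq_max leq_maxl /= leq_max; apply/orP; right; exact: leq_addr.
  by case: [forall v, sm #|S v|]; case: (bad1 S); case: (bad2 S).
rewrite Rplus_comm [X in _ <= X]Rplus_comm; apply: Rplus_le_compat.
  apply: Rle_trans (prob_or HP (E1 := fun S : config n m => bad1 S && [forall v, sm #|S v|])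
     (E2 := fun S : config n m => bad2 S && [forall v, sm #|S v|]) _) _ => //.
  set A := INR n * INR m * M2 m P.
  have hA : 0 <= A by rewrite /A; posR.
  set s := sqrt (INR m).
  have ss : s * s = INR m by rewrite /s sqrt_sqrt; lra.
  have s1 : 1 <= s by rewrite /s -sqrt_1; apply: sqrt_le_1_alt.
  have sm' : s <= INR m by nra.
  rewrite Rmult_plus_distr_r; apply: Rplus_le_compat.
    apply: Rle_trans (prob_bad1 n HP hm sm) _.
    have hq := Q3_le he hn; rewrite -/sm -/s in hq.
    have c0 : 0 <= INR m * (INR n * (INR n * (INR n * (INR n * (M2 m P * (M2 m P * M2 m P)))))) by posR.
    have -> : INR m * (INR n * (INR n * (INR n * (INR n * (M2 m P * (M2 m P * M2 m P) * Q3 m P sm))))) =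
      INR m * (INR n * (INR n * (INR n * (INR n * (M2 m P * (M2 m P * M2 m P)))))) * Q3 m P sm by ring.
    apply: Rle_trans (Rmult_le_compat_l _ _ _ c0 hq) _.
    have -> : INR m * (INR n * (INR n * (INR n * (INR n * (M2 m P * (M2 m P * M2 m P)))))) *
      (e * s * (INR m ^ 2 * M2 m P)) = e * A ^ 4 * (s / INR m) by rewrite /A; field; lra.
    have hsm : s / INR m <= 1 by apply: (Rmult_le_reg_r (INR m)); [lra| field_simplify; lra].
    have : 0 <= e * A ^ 4 by apply: Rmult_le_pos; [lra| apply: pow_le].
    nra.
  apply: Rle_trans (prob_bad2 n HP hm sm) _.
  have h3 := M3_le he hn; rewrite -/sm -/s in h3.
  have h30 := M3s_ge0 HP hm sm.
  have h4 : M3s m P sm ^ 4 <= (e * s / INR m * M2 m P) ^ 4 by apply: pow_incr.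
  have c0 : 0 <= INR n ^ 4 * INR m ^ 6 by apply: Rmult_le_pos; apply: pow_le; exact: pos_INR.
  have -> : INR n * (INR n * (INR n * (INR n * (INR m * (INR m * (INR m * (INR m * (INR m * (INR m *
    (M3s m P sm * (M3s m P sm * (M3s m P sm * M3s m P sm)))))))))))) =
    INR n ^ 4 * INR m ^ 6 * M3s m P sm ^ 4 by ring.
  apply: Rle_trans (Rmult_le_compat_l _ _ _ c0 h4) _.
  have s4 : s ^ 4 = INR m ^ 2 by rewrite -ss; ring.
  right.
  have -> : INR n ^ 4 * INR m ^ 6 * (e * s / INR m * M2 m P) ^ 4 =
     INR n ^ 4 * INR m ^ 6 * (e ^ 4 * s ^ 4 / INR m ^ 4 * M2 m P ^ 4) by field; lra.
  rewrite s4 /A; field; lra.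
apply: Rle_trans (prob_notgood n HP sm) _.
right; congr (_ * _); rewrite /probY_gt; apply: eq_bigl => k; by rewrite /sm /smk negbK.
Qed.

End Final.


Lemma prob_compl (n m : nat) (P : nat -> R) (E : pred (config n m)) :
  is_prob_measure m P -> prob P E + prob P (fun S => ~~ E S) = 1.
Proof.
move=> HP.
have tot : prob P (fun _ : config n m => true) = 1.
  transitivity (prob P (fun S : config n m => [forall v, (fun _ (_ : {set 'I_m}) => true) v (S v)])).
    by apply: eq_bigl => S; symmetry; apply/forallP.
  rewrite (prob_forall P (fun _ (_ : {set 'I_m}) => true)).
  rewrite big1 // => v _; exact: (total_nu HP).
rewrite -tot /prob [X in _ = X](bigID E) /=; reflexivity.
Qed.

Theorem theorem2 :
  (* Part 1: omega(G(n)) = omega'(G(n)) + O_P(1). *)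
  (forall (m : nat -> nat) (P : nat -> nat -> R),
     ri_sequence m P ->
     condA m P ->
     eventually_bounded (fun n => VarY n (m n) (P n)) ->
     forall eps : R, (0 < eps) ->
       exists (K N : nat), forall n : nat, (N <= n)%N ->
         (prob (P n) (fun S : config n (m n) =>
            (clique_number S > omega' S + K)%N
            || (omega' S > clique_number S + K)%N) <= eps))
  /\
  (* Part 2: an absolute constant C, valid for every such sequence. *)
  (exists C : nat,
     forall (m : nat -> nat) (P : nat -> nat -> R) (epsn : nat -> R),
       ri_sequence m P ->
       condA m P ->
       eventually_bounded (fun n => VarY n (m n) (P n)) ->
       (forall n, (0 < epsn n)) ->
       tends_to epsn R0 ->
       tends_to (fun n => INR n * probY_gt n (m n) (P n) (epsn n * sqrt (INR n)))
                R0 ->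
       tends_to (fun n => prob (P n) (fun S : config n (m n) =>
                   (clique_number S <= maxn C (omega' S + 3))%N)) R1).
Proof.
split.
  move=> m P [hinf hP] [B1 [N1 hB1]] [B2 [N2 hB2]] eps heps.
  have [N0 hN0] := hinf 1%N.
  set A0 := B2 + B1 ^ 2.
  have [K0 hK0] := nat_above ((A0 ^ 2 + A0 ^ 3) / eps).
  exists K0.+1, (maxn N0 (maxn N1 N2)) => n hn.
  have hm : (0 < m n)%N by apply: hN0; lia.
  have hb1 := hB1 n (ltac:(lia)); have hb2 := hB2 n (ltac:(lia)).
  have hA := EY2_le hm hb1 hb2.
  have h := part1_n (hP n) hm (ltn0Sn K0) hA.
  have hK : INR K0 < INR K0.+1 by apply: lt_INR; apply/ltP.
  have hK0' : 0 < INR K0.+1 by apply: lt_0_INR; apply/ltP.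
  have : (A0 ^ 2 + A0 ^ 3) < eps * INR K0.+1.
    have := hK0; rewrite /Rdiv => h1.
    apply: (Rmult_lt_reg_r (/ eps)); first by apply: Rinv_0_lt_compat.
    have -> : eps * INR K0.+1 * / eps = INR K0.+1 by field; lra.
    lra.
  move=> h2.
  rewrite -/A0 in h; apply: Rlt_le; apply: (Rmult_lt_reg_r (INR K0.+1)) => //; lra.
exists 3%N.
move=> m P epsn [hinf hP] [B1 [N1 hB1]] [B2 [N2 hB2]] hepos heps0 hY e he.
have [N0 hN0] := hinf 1%N.
set A0 := B2 + B1 ^ 2.
set C := A0 ^ 4.
have hC : 0 <= C by rewrite /C; have := pow2_ge_0 (A0 ^ 2); rewrite -pow_mult.
set d := Rmin 1 (e / (2 * (2 * C + 1))).
have hd : 0 < d.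
  rewrite /d; apply: Rmin_pos; first lra.
  apply: Rdiv_lt_0_compat => //; lra.
have [N3 hN3] := heps0 d hd.
have [N4 hN4] := hY (e / 2) (ltac:(lra)).
exists (maxn (maxn N0 (maxn N1 N2)) (maxn N3 (maxn N4 1))) => n hn.
have hm : (0 < m n)%N by apply: hN0; lia.
have hn0 : (0 < n)%N by lia.
have hb1 := hB1 n (ltac:(lia)); have hb2 := hB2 n (ltac:(lia)).
have hA := EY2_le hm hb1 hb2; rewrite -/A0 in hA.
have h2 := M2_ge0 (hP n) hm.
have hA0 : 0 <= INR n * INR (m n) * M2 (m n) (P n) by posR.
have hA4 : (INR n * INR (m n) * M2 (m n) (P n)) ^ 4 <= C by apply: pow_incr.
have he1 := hepos n.
have he2 := hN3 n (ltac:(lia)); rewrite Rminus_0_r Rabs_pos_eq in he2; last lra.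
have hy := hN4 n (ltac:(lia)); rewrite Rminus_0_r in hy.
have hy' := Rle_abs (INR n * probY_gt n (m n) (P n) (epsn n * sqrt (INR n))).
have hd1 : d <= 1 by apply: Rmin_l.
have hd2 : d <= e / (2 * (2 * C + 1)) by apply: Rmin_r.
have hb := part2_n (hP n) hm he1 hn0.
have hc := prob_compl (fun S : config n (m n) => (clique_number S <= maxn 3 (omega' S + 3))%N) (hP n).
have hg0 := prob_ge0 (hP n) (fun S : config n (m n) => ~~ (clique_number S <= maxn 3 (omega' S + 3))%N).
set pr := prob (P n) (fun S : config n (m n) => ~~ (clique_number S <= maxn 3 (omega' S + 3))%N) in hb hc hg0.
have e4 : epsn n ^ 4 <= epsn n.
  have : epsn n ^ 4 = epsn n * (epsn n ^ 3) by ring.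
  move=> ->; have : epsn n ^ 3 <= 1 by rewrite -(pow1 3); apply: pow_incr; lra.
  nra.
have key : (epsn n + epsn n ^ 4) * (INR n * INR (m n) * M2 (m n) (P n)) ^ 4 < e / 2.
  apply: Rle_lt_trans (_ : 2 * epsn n * C < e / 2).
    apply: Rle_trans (_ : (epsn n + epsn n ^ 4) * C <= _); first by apply: Rmult_le_compat_l; [have := pow_le (epsn n) 4; lra| exact: hA4].
    nra.
  have : 2 * C * (e / (2 * (2 * C + 1))) < e / 2.
    have -> : 2 * C * (e / (2 * (2 * C + 1))) = e / 2 * (2 * C / (2 * C + 1)) by field; lra.
    have : 2 * C / (2 * C + 1) < 1 by apply: (Rmult_lt_reg_r (2 * C + 1)); [lra| field_simplify; lra].
    nra.
  nra.
rewrite /Rminus; rewrite Rabs_left1; [|lra].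
lra.
Qed.
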